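(* Let $\Gamma$ be a group with finite symmetric generating set $S$ acting on a countably infinite set $X$, let $\mu$ be a $\Gamma$-invariant mean on $X$, and let $R$ be a subgraph of the Schreier graph $S_\Gamma$ all of whose connected components have at most $C$ vertices. Suppose that in every component of $R$ the number of edges divided by the number of vertices is at least $\alpha$. Then $\alpha\,\mu(V(R))\le\mu_E(R)$.
   Context: A mean on $X$ is a finitely additive $\mu:2^X\to[0,1]$ with $\mu(X)=1$; $\Gamma$-invariant means $\mu(\gamma A)=\mu(A)$ for all $\gamma,A$. The Schreier graph $S_\Gamma$ has vertex set $X$ and an edge $\{x,y\}$ when $x\neq y$ and $s(x)=y$ for some $s\in S$. For a subgraph $R$, $\deg_R(x)$ is the degree of $x$ in $R$ ($0$ for $x\notin V(R)$) and $\mu_E(R)=\frac12\sum_{k\ge0}k\,\mu(\{x:\deg_R(x)=k\})$. *)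

(* Defs.v *)
From Stdlib Require Import Reals List Relations.
Open Scope R_scope.

Definition card_eq {T : Type} (P : T -> Prop) (n : nat) : Prop :=
  exists l : list T, NoDup l /\ length l = n /\ (forall x, In x l <-> P x).

Definition is_group {G : Type} (e : G) (mul : G -> G -> G) (inv : G -> G) : Prop :=
  (forall a b c, mul a (mul b c) = mul (mul a b) c) /\
  (forall a, mul e a = a /\ mul a e = a) /\
  (forall a, mul (inv a) a = e /\ mul a (inv a) = e).

Definition is_action {G X : Type} (e : G) (mul : G -> G -> G) (act : G -> X -> X) : Prop :=
  (forall x, act e x = x) /\ (forall g h x, act (mul g h) x = act g (act h x)).

Definition sym_gen_set {G : Type} (e : G) (mul : G -> G -> G) (inv : G -> G)
  (S : list G) : Prop :=
  (forall s, In s S -> In (inv s) S) /\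
  (forall g, exists l : list G, (forall s, In s l -> In s S) /\ fold_right mul e l = g).

Definition countably_infinite (X : Type) : Prop :=
  exists f : nat -> X, (forall m n, f m = f n -> m = n) /\ (forall x, exists n, f n = x).

Definition is_mean {X : Type} (mu : (X -> Prop) -> R) : Prop :=
  (forall A, 0 <= mu A <= 1) /\
  mu (fun _ => True) = 1 /\
  (forall A B, (forall x, A x -> B x -> False) ->
     mu (fun x => A x \/ B x) = mu A + mu B).

Definition act_image {G X : Type} (act : G -> X -> X) (g : G) (A : X -> Prop) : X -> Prop :=
  fun y => exists x, A x /\ y = act g x.

Definition invariant_mean {G X : Type} (act : G -> X -> X) (mu : (X -> Prop) -> R) : Prop :=
  forall g A, mu (act_image act g A) = mu A.

Definition schreier_edge {G X : Type} (act : G -> X -> X) (S : list G) (x y : X) : Prop :=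
  x <> y /\ exists s, In s S /\ act s x = y.

Definition schreier_subgraph {G X : Type} (act : G -> X -> X) (S : list G)
  (VR : X -> Prop) (ER : X -> X -> Prop) : Prop :=
  (forall x y, ER x y -> ER y x) /\
  (forall x y, ER x y -> VR x /\ VR y /\ schreier_edge act S x y).

(* deg_R(x) = k  (automatically 0 for x not in V(R)). *)
Definition deg_eq {X : Type} (ER : X -> X -> Prop) (x : X) (k : nat) : Prop :=
  card_eq (ER x) k.

Definition component {X : Type} (ER : X -> X -> Prop) (x : X) : X -> Prop :=
  fun y => clos_refl_trans X ER x y.

(* Ordered pairs (y,z) with y in the component of x and {y,z} an edge;
   their number is twice the number of edges of the component. *)
Definition component_darts {X : Type} (ER : X -> X -> Prop) (x : X) : X * X -> Prop :=
  fun p => component ER x (fst p) /\ ER (fst p) (snd p).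

(* mu_E(R) = 1/2 sum_k k mu{x : deg_R x = k}; degrees are bounded by |S|,
   so the sum is truncated at k = length S (all later terms are mu(empty) = 0). *)
Definition mu_E {X : Type} (mu : (X -> Prop) -> R) (ER : X -> X -> Prop) (D : nat) : R :=
  / 2 * sum_f_R0 (fun k => INR k * mu (fun x => deg_eq ER x k)) D.

(* Main.v *)
From Stdlib Require Import Reals List Relations ClassicalEpsilon Classical Permutation FunctionalExtensionality PropExtensionality Lra Lia.
Require Import Defs.
Open Scope R_scope.

Definition ind (P : Prop) : R := if excluded_middle_informative P then 1 else 0.

Lemma ind_true (P : Prop) : P -> ind P = 1.
Proof. unfold ind; destruct excluded_middle_informative; tauto. Qed.
Lemma ind_false (P : Prop) : ~ P -> ind P = 0.
Proof. unfold ind; destruct excluded_middle_informative; tauto. Qed.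
Lemma ind_iff (P Q : Prop) : (P <-> Q) -> ind P = ind Q.
Proof. intros H; unfold ind; do 2 destruct excluded_middle_informative; tauto. Qed.
Lemma ind_and (P Q : Prop) : ind (P /\ Q) = ind P * ind Q.
Proof. unfold ind; repeat destruct excluded_middle_informative; try tauto; lra. Qed.

Fixpoint sumR {T : Type} (l : list T) (f : T -> R) : R :=
  match l with nil => 0 | a :: l' => f a + sumR l' f end.

Lemma sumR_ext {T} (l : list T) f g : (forall a, In a l -> f a = g a) -> sumR l f = sumR l g.
Proof. induction l; simpl; intros H; auto. rewrite H, IHl; auto. Qed.
Lemma sumR_plus {T} (l : list T) f g : sumR l (fun a => f a + g a) = sumR l f + sumR l g.
Proof. induction l; simpl; lra. Qed.
Lemma sumR_scal {T} (l : list T) c f : sumR l (fun a => c * f a) = c * sumR l f.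
Proof. induction l; simpl; lra. Qed.
Lemma sumR_const {T} (l : list T) c : sumR l (fun _ => c) = INR (length l) * c.
Proof. induction l; simpl length; rewrite ?S_INR; simpl; lra. Qed.
Lemma sumR_zero {T} (l : list T) f : (forall a, In a l -> f a = 0) -> sumR l f = 0.
Proof. intros H. rewrite (sumR_ext l f (fun _ => 0)) by auto. rewrite sumR_const; lra. Qed.
Lemma sumR_app {T} (l1 l2 : list T) f : sumR (l1 ++ l2) f = sumR l1 f + sumR l2 f.
Proof. induction l1; simpl; lra. Qed.
Lemma sumR_map {T U} (l : list T) (h : T -> U) f : sumR (map h l) f = sumR l (fun a => f (h a)).
Proof. induction l; simpl; congruence. Qed.
Lemma sumR_flat_map {T U} (l : list T) (h : T -> list U) f :
  sumR (flat_map h l) f = sumR l (fun a => sumR (h a) f).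
Proof. induction l; simpl; auto. rewrite sumR_app; congruence. Qed.
Lemma sumR_perm {T} (l l' : list T) f : Permutation l l' -> sumR l f = sumR l' f.
Proof. induction 1; simpl; lra. Qed.

Lemma sumR_filter {T} (l : list T) (Q : T -> Prop) f :
  sumR l (fun a => ind (Q a) * f a) =
  sumR (filter (fun a => if excluded_middle_informative (Q a) then true else false) l) f.
Proof.
  induction l; simpl; auto.
  unfold ind at 1; destruct excluded_middle_informative; simpl; rewrite IHl; lra.
Qed.

Lemma sumR_reindex {I Y : Type} (L : list I) (lK : list Y) (Q : I -> Prop) (h : I -> Y) (phi : Y -> R) :
  NoDup L -> NoDup lK ->
  (forall i j, In i L -> In j L -> Q i -> Q j -> h i = h j -> i = j) ->
  (forall y, In y lK <-> exists i, In i L /\ Q i /\ h i = y) ->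
  sumR L (fun i => ind (Q i) * phi (h i)) = sumR lK phi.
Proof.
  intros HL HK Hinj Him.
  rewrite (sumR_filter L Q (fun i => phi (h i))).
  rewrite <- (sumR_map _ h phi).
  apply sumR_perm.
  apply NoDup_Permutation; auto.
  - apply NoDup_map_NoDup_ForallPairs.
    + intros a b Ha Hb. apply filter_In in Ha; apply filter_In in Hb.
      destruct Ha as [Ha Qa]; destruct Hb as [Hb Qb].
      destruct excluded_middle_informative in Qa; try discriminate.
      destruct excluded_middle_informative in Qb; try discriminate.
      apply Hinj; auto.
    + apply NoDup_filter; auto.
  - intros y; rewrite in_map_iff, Him; split.
    + intros [i [Hi Hy]]. apply filter_In in Hy. destruct Hy as [Hy Qy].
      destruct excluded_middle_informative in Qy; try discriminate. eauto.
    + intros [i [Hi [Qi Hy]]]. exists i; split; auto. apply filter_In; split; auto.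
      destruct excluded_middle_informative; tauto.
Qed.

Lemma sumR_collapse (L : list nat) (Q : Prop) (a : nat) (f : nat -> R) :
  NoDup L -> (Q -> In a L) ->
  sumR L (fun n => ind (Q /\ n = a) * f n) = ind Q * f a.
Proof.
  intros HL HQ. destruct (classic Q) as [q|nq].
  - specialize (HQ q). rewrite (ind_true Q q).
    induction L as [|b L IH]; simpl in *. contradiction.
    inversion HL; subst.
    destruct HQ as [->|Hin].
    + rewrite ind_true by auto. rewrite sumR_zero. lra.
      intros c Hc. rewrite ind_false. lra. intros [_ ->]. contradiction.
    + rewrite ind_false. rewrite IH; auto. lra. intros [_ ->]. contradiction.
  - rewrite ind_false by auto. rewrite sumR_zero. lra.
    intros c _. rewrite ind_false. lra. tauto.
Qed.

Lemma mu_ext {X} (mu : (X -> Prop) -> R) (A B : X -> Prop) :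
  (forall x, A x <-> B x) -> mu A = mu B.
Proof.
  intros H. f_equal. apply functional_extensionality; intros x.
  apply propositional_extensionality; auto.
Qed.

Lemma mu_add {X} (mu : (X -> Prop) -> R) (Z A B : X -> Prop) : is_mean mu ->
  (forall x, A x -> B x -> False) -> (forall x, Z x <-> A x \/ B x) -> mu Z = mu A + mu B.
Proof.
  intros [_ [_ Hm]] Hd Hz. rewrite <- Hm by auto. apply mu_ext; auto.
Qed.

Lemma mu_empty {X} (mu : (X -> Prop) -> R) (A : X -> Prop) : is_mean mu ->
  (forall x, ~ A x) -> mu A = 0.
Proof.
  intros Hm H. pose proof (mu_add mu A A A Hm (fun x a _ => H x a)) as E.
  assert (mu A = mu A + mu A) by (apply E; tauto). lra.
Qed.

Lemma mu_split {X} (mu : (X -> Prop) -> R) (Z A : X -> Prop) : is_mean mu ->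
  mu Z = mu (fun x => Z x /\ A x) + mu (fun x => Z x /\ ~ A x).
Proof. intros Hm; apply mu_add; auto. tauto. intros x; pose proof (classic (A x)); tauto. Qed.

Definition Int {X} (mu : (X -> Prop) -> R) (l : list (R * (X -> Prop))) : R :=
  sumR l (fun p => fst p * mu (snd p)).
Definition val {X} (l : list (R * (X -> Prop))) (x : X) : R :=
  sumR l (fun p => ind (snd p x) * fst p).

Lemma pos_gen {X} (mu : (X -> Prop) -> R) (Hm : is_mean mu) (l : list (R * (X -> Prop))) :
  forall (Z : X -> Prop) c, (forall x, Z x -> 0 <= c + val l x) ->
  0 <= c * mu Z + sumR l (fun p => fst p * mu (fun x => snd p x /\ Z x)).
Proof.
  induction l as [|[w A] l IH]; intros Z c HZ; simpl.
  - destruct (classic (exists x, Z x)) as [[x Hx]|Hn].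
    + specialize (HZ x Hx); unfold val in HZ; simpl in HZ.
      destruct Hm as [H01 _]. specialize (H01 Z). nra.
    + rewrite (mu_empty mu Z Hm) by (intros x Hx; eauto). lra.
  - pose proof (IH (fun x => Z x /\ A x) (c + w)) as H1.
    pose proof (IH (fun x => Z x /\ ~ A x) c) as H2.
    assert (P1 : 0 <= (c + w) * mu (fun x => Z x /\ A x) +
       sumR l (fun p => fst p * mu (fun x => snd p x /\ (Z x /\ A x)))).
    { apply H1. intros x [Zx Ax]. specialize (HZ x Zx). unfold val in HZ |- *; simpl in HZ.
      rewrite ind_true in HZ by auto. lra. }
    assert (P2 : 0 <= c * mu (fun x => Z x /\ ~ A x) +
       sumR l (fun p => fst p * mu (fun x => snd p x /\ (Z x /\ ~ A x)))).
    { apply H2. intros x [Zx Ax]. specialize (HZ x Zx). unfold val in HZ |- *; simpl in HZ.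
      rewrite ind_false in HZ by auto. lra. }
    rewrite (mu_split mu Z A Hm).
    rewrite (mu_ext mu (fun x => A x /\ Z x) (fun x => Z x /\ A x)) by tauto.
    rewrite (sumR_ext l _ (fun p => fst p * mu (fun x => snd p x /\ (Z x /\ A x)) +
        fst p * mu (fun x => snd p x /\ (Z x /\ ~ A x)))).
    + rewrite sumR_plus. lra.
    + intros p _. rewrite (mu_split mu (fun x => snd p x /\ Z x) A Hm).
      rewrite (mu_ext mu (fun x => (snd p x /\ Z x) /\ A x) (fun x => snd p x /\ (Z x /\ A x))) by tauto.
      rewrite (mu_ext mu (fun x => (snd p x /\ Z x) /\ ~ A x) (fun x => snd p x /\ (Z x /\ ~ A x))) by tauto.
      lra.
Qed.

Lemma Int_nonneg {X} (mu : (X -> Prop) -> R) (Hm : is_mean mu) (l : list (R * (X -> Prop))) :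
  (forall x, 0 <= val l x) -> 0 <= Int mu l.
Proof.
  intros H. pose proof (pos_gen mu Hm l (fun _ => True) 0) as P.
  assert (P' := P (fun x _ => ltac:(specialize (H x); lra))).
  unfold Int. rewrite (sumR_ext l _ (fun p => fst p * mu (fun x => snd p x /\ True))).
  lra. intros p _. f_equal. apply mu_ext. tauto.
Qed.

Definition negl {X} (l : list (R * (X -> Prop))) := map (fun p => (- fst p, snd p)) l.

Lemma Int_app {X} mu (l1 l2 : list (R * (X -> Prop))) : Int mu (l1 ++ l2) = Int mu l1 + Int mu l2.
Proof. apply sumR_app. Qed.
Lemma val_app {X} (l1 l2 : list (R * (X -> Prop))) x : val (l1 ++ l2) x = val l1 x + val l2 x.
Proof. apply sumR_app. Qed.
Lemma Int_negl {X} mu (l : list (R * (X -> Prop))) : Int mu (negl l) = - Int mu l.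
Proof. unfold Int, negl. rewrite sumR_map. induction l; simpl in *; [lra|]. rewrite IHl; lra. Qed.
Lemma val_negl {X} (l : list (R * (X -> Prop))) x : val (negl l) x = - val l x.
Proof. unfold val, negl. rewrite sumR_map. induction l; simpl in *; [lra|]. rewrite IHl; lra. Qed.

Lemma finite_list {X} (P : X -> Prop) (l : list X) :
  (forall x, P x -> In x l) -> exists l', NoDup l' /\ forall z, In z l' <-> P z.
Proof.
  revert P. induction l as [|a l IH]; intros P HP.
  - exists nil; split. constructor. intros z; split; simpl; [tauto|]. intros Pz; apply (HP z Pz).
  - destruct (IH (fun x => P x /\ x <> a)) as [l' [Hn Hl']].
    { intros x [Px Ha]. destruct (HP x Px) as [E|E]; [congruence|exact E]. }
    destruct (classic (P a)) as [Pa|nPa].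
    + exists (a :: l'); split.
      * constructor; auto. rewrite Hl'. tauto.
      * intros z; simpl; rewrite Hl'. split; [intros [->|[]]; auto|].
        intros Pz; destruct (classic (a = z)); auto.
    + exists l'; split; auto. intros z; rewrite Hl'; split; [tauto|].
      intros Pz; split; auto. intros ->; contradiction.
Qed.

Lemma card_unique {X} (P : X -> Prop) n m : card_eq P n -> card_eq P m -> n = m.
Proof.
  intros [l1 [N1 [L1 H1]]] [l2 [N2 [L2 H2]]]. subst.
  apply Permutation_length, NoDup_Permutation; auto.
  intros x; rewrite H1, H2; tauto.
Qed.

Lemma list_card_eq {X} (P : X -> Prop) l : NoDup l -> (forall z, In z l <-> P z) -> card_eq P (length l).
Proof. intros; exists l; auto. Qed.

Definition nbl {X} (ER : X -> X -> Prop) (x : X) : list X :=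
  epsilon (inhabits nil) (fun l => NoDup l /\ forall z, In z l <-> ER x z).
Definition degf {X} (ER : X -> X -> Prop) (x : X) : nat := length (nbl ER x).
Definition compl {X} (ER : X -> X -> Prop) (x : X) : list X :=
  epsilon (inhabits nil) (fun l => NoDup l /\ forall z, In z l <-> component ER x z).
Definition compf {X} (ER : X -> X -> Prop) (x : X) : nat := length (compl ER x).

Lemma nbl_spec {G X} (act : G -> X -> X) S VR ER x :
  schreier_subgraph act S VR ER ->
  NoDup (nbl ER x) /\ forall z, In z (nbl ER x) <-> ER x z.
Proof.
  intros [_ Hs]. unfold nbl. apply epsilon_spec.
  apply (finite_list _ (map (fun s => act s x) S)).
  intros z Hz. destruct (Hs _ _ Hz) as [_ [_ [_ [s [Hs1 Hs2]]]]].
  apply in_map_iff; eauto.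
Qed.

Lemma degf_bound {G X} (act : G -> X -> X) S VR ER x :
  schreier_subgraph act S VR ER -> (degf ER x <= length S)%nat.
Proof.
  intros Hsub. destruct (nbl_spec act S VR ER x Hsub) as [Hn Hl].
  unfold degf. rewrite <- (length_map (fun s => act s x) S).
  apply NoDup_incl_length; auto. intros z Hz. apply Hl in Hz.
  destruct Hsub as [_ Hs]. destruct (Hs _ _ Hz) as [_ [_ [_ [s [Hs1 Hs2]]]]].
  apply in_map_iff; eauto.
Qed.

Lemma degf_notVR {G X} (act : G -> X -> X) S VR ER x :
  schreier_subgraph act S VR ER -> ~ VR x -> degf ER x = 0%nat.
Proof.
  intros Hsub Hx. destruct (nbl_spec act S VR ER x Hsub) as [Hn Hl].
  unfold degf. destruct (nbl ER x) as [|a l]; auto.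
  exfalso. assert (ER x a) by (apply Hl; simpl; auto).
  destruct Hsub as [_ Hs]. apply Hx, (Hs _ _ H).
Qed.

Lemma deg_eq_iff {G X} (act : G -> X -> X) S VR ER x k :
  schreier_subgraph act S VR ER -> (deg_eq ER x k <-> k = degf ER x).
Proof.
  intros Hsub. destruct (nbl_spec act S VR ER x Hsub) as [Hn Hl].
  assert (Hc : deg_eq ER x (degf ER x)) by (apply list_card_eq; auto).
  split. intros H; apply (card_unique _ _ _ H Hc). intros ->; auto.
Qed.

Lemma comp_sym {X} (ER : X -> X -> Prop) x y :
  (forall a b, ER a b -> ER b a) -> component ER x y -> component ER y x.
Proof.
  intros Hs H. unfold component in *. induction H.
  - apply rt_step; auto.
  - apply rt_refl.
  - eapply rt_trans; eauto.
Qed.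

Lemma comp_trans {X} (ER : X -> X -> Prop) x y z :
  component ER x y -> component ER y z -> component ER x z.
Proof. unfold component; intros; eapply rt_trans; eauto. Qed.

Lemma comp_VR {G X} (act : G -> X -> X) S VR ER x y :
  schreier_subgraph act S VR ER -> VR x -> component ER x y -> VR y.
Proof.
  intros [_ Hs] Hx H. unfold component in H. induction H; auto.
  apply (Hs _ _ H).
Qed.

Lemma compl_spec {X} (ER : X -> X -> Prop) x :
  (exists n, card_eq (component ER x) n) ->
  NoDup (compl ER x) /\ forall z, In z (compl ER x) <-> component ER x z.
Proof.
  intros [n [l [Hn [_ Hl]]]]. unfold compl. apply epsilon_spec. eauto.
Qed.

Lemma compf_card {X} (ER : X -> X -> Prop) x :
  (exists n, card_eq (component ER x) n) -> card_eq (component ER x) (compf ER x).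
Proof. intros H. destruct (compl_spec ER x H). apply list_card_eq; auto. Qed.

Lemma compf_same {X} (ER : X -> X -> Prop) x y :
  (forall a b, ER a b -> ER b a) ->
  (exists n, card_eq (component ER x) n) -> component ER x y -> compf ER y = compf ER x.
Proof.
  intros Hs Hex Hxy. destruct (compl_spec ER x Hex) as [Hn Hl].
  assert (Hc : card_eq (component ER y) (compf ER x)).
  { apply list_card_eq; auto. intros z; rewrite Hl; split; intros H.
    - eapply comp_trans; [apply comp_sym|]; eauto.
    - eapply comp_trans; eauto. }
  apply (card_unique _ _ _ (compf_card ER y (ex_intro _ _ Hc)) Hc).
Qed.

Lemma darts_sum {G X} (act : G -> X -> X) S VR ER x m :
  schreier_subgraph act S VR ER ->
  (exists n, card_eq (component ER x) n) ->
  card_eq (component_darts ER x) m ->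
  INR m = sumR (compl ER x) (fun y => INR (degf ER y)).
Proof.
  intros Hsub Hex Hm. destruct (compl_spec ER x Hex) as [Hn Hl].
  set (DL := flat_map (fun y => map (fun z => (y, z)) (nbl ER y)) (compl ER x)).
  assert (Hc : card_eq (component_darts ER x) (length DL)).
  { apply list_card_eq.
    - unfold DL. clear Hl. induction (compl ER x) as [|a l IH]; simpl. constructor.
      inversion Hn; subst. apply NoDup_app.
      + apply NoDup_map_NoDup_ForallPairs. intros u v _ _ E; congruence.
        apply (nbl_spec act S VR ER a Hsub).
      + apply IH; auto.
      + intros [u v] HA HB. apply in_map_iff in HA. destruct HA as [w [E _]]. inversion E; subst.
        apply in_flat_map in HB. destruct HB as [b [Hb HB]]. apply in_map_iff in HB.
        destruct HB as [w2 [E2 _]]. inversion E2; subst. contradiction.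
    - intros [u v]. unfold DL, component_darts; simpl. rewrite in_flat_map. split.
      + intros [b [Hb H]]. apply in_map_iff in H. destruct H as [w [E Hw]]. injection E as <- <-.
        split. apply Hl; auto. apply (nbl_spec act S VR ER b Hsub); auto.
      + intros [Hu Hv]. exists u; split. apply Hl; auto. apply in_map_iff. exists v; split; auto.
        apply (nbl_spec act S VR ER u Hsub); auto. }
  rewrite (card_unique _ _ _ Hm Hc). unfold DL. clear.
  induction (compl ER x); simpl. reflexivity.
  rewrite length_app, plus_INR, length_map, IHl. reflexivity.
Qed.

Fixpoint reach {X} (ER : X -> X -> Prop) (j : nat) (x y : X) : Prop :=
  match j with
  | O => x = y
  | S j' => reach ER j' x y \/ exists z, reach ER j' x z /\ ER z y
  end.

Lemma reach_mono {X} (ER : X -> X -> Prop) j k x y : (j <= k)%nat -> reach ER j x y -> reach ER k x y.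
Proof. induction 1; simpl; auto. Qed.

Lemma reach_comp {X} (ER : X -> X -> Prop) j x y : reach ER j x y -> component ER x y.
Proof.
  revert y; induction j; simpl; intros y H.
  - subst; apply rt_refl.
  - destruct H as [H|[z [H1 H2]]]; auto. eapply rt_trans; [apply IHj, H1|apply rt_step, H2].
Qed.

Lemma reach_bound {X} (ER : X -> X -> Prop) x n y :
  card_eq (component ER x) n -> component ER x y -> reach ER n x y.
Proof.
  intros [lK [HK [HL Hin]]] Hy.
  assert (Claim : forall j, (forall y, component ER x y -> reach ER j x y) \/
     (exists l, NoDup l /\ length l = S j /\ forall y, In y l -> reach ER j x y)).
  { induction j as [|j IH].
    - right. exists (x :: nil). split. constructor; [simpl; tauto|constructor].
      split; auto. intros y0 [<-|[]]; simpl; auto.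
    - destruct IH as [IH|[l [Hn [Hl Hr]]]].
      + left; intros y0 H0; simpl; auto.
      + destruct (classic (exists y0, reach ER (S j) x y0 /\ ~ reach ER j x y0)) as [[y0 [H1 H2]]|Hno].
        * right. exists (y0 :: l). split.
          { constructor; auto. }
          split; simpl; auto. intros y1 [<-|Hy1]; auto.
        * left. intros y0 H0. simpl; left.
          apply clos_rt_rtn1 in H0. induction H0.
          -- apply (reach_mono ER 0); [lia|reflexivity].
          -- apply NNPP; intros Hn'. apply Hno. exists z; split; auto.
             simpl; right; eauto. }
  destruct (Claim n) as [H|[l [Hn [Hl Hr]]]]; auto.
  exfalso. assert (length l <= length lK)%nat.
  { apply NoDup_incl_length; auto. intros z Hz. apply Hin, (reach_comp ER n), Hr, Hz. }
  lia.
Qed.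

Fixpoint words {G} (e : G) (mul : G -> G -> G) (S : list G) (j : nat) : list G :=
  match j with
  | O => e :: nil
  | S j' => words e mul S j' ++ flat_map (fun g => map (fun s => mul s g) S) (words e mul S j')
  end.

Lemma words_reach {G X} e mul (act : G -> X -> X) S VR ER j x y :
  is_action e mul act -> schreier_subgraph act S VR ER ->
  reach ER j x y -> exists g, In g (words e mul S j) /\ act g x = y.
Proof.
  intros [Ha1 Ha2] [_ Hs]. revert y; induction j; simpl; intros y H.
  - subst. exists e; auto.
  - destruct H as [H|[z [H1 H2]]].
    + destruct (IHj y H) as [g [Hg E]]. exists g; split; auto. apply in_or_app; auto.
    + destruct (IHj z H1) as [g [Hg E]].
      destruct (Hs _ _ H2) as [_ [_ [_ [s [Hs1 Hs2]]]]].
      exists (mul s g); split.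
      * apply in_or_app; right. apply in_flat_map. exists g; split; auto. apply (in_map (fun s0 => mul s0 g)); auto.
      * rewrite Ha2, E; auto.
Qed.

Lemma min_index (P : nat -> Prop) n : P n -> exists m, P m /\ (m <= n)%nat /\ forall j, (j < m)%nat -> ~ P j.
Proof.
  revert P. induction n; intros P Pn.
  - exists 0%nat; split; auto. split; auto. intros; lia.
  - destruct (classic (exists k, (k <= n)%nat /\ P k)) as [[k [Hk Pk]]|Hno].
    + destruct (IHn (fun j => (j <= n)%nat /\ exists k, (k <= j)%nat /\ P k)) as [m [[Hm1 [k' [Hk' Pk']]] [Hm2 Hm3]]].
      { split; [lia|eauto]. }
      clear Hm2.
      destruct (classic (P m)) as [Pm|nPm].
      * exists m; split; auto. split; [lia|]. intros j Hj Pj. apply (Hm3 j Hj). split; [lia|]. exists j; split; auto.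
      * exfalso. assert (k' < m)%nat by (destruct (Nat.eq_dec k' m); [subst; contradiction|lia]).
        apply (Hm3 k'); auto. split; [lia|]. exists k'; split; auto.
    + exists (S n); split; auto. split; auto. intros j Hj Pj. apply Hno. exists j; split; auto; lia.
Qed.

Lemma act_inv_l {G X} e mul inv (act : G -> X -> X) g x :
  is_group e mul inv -> is_action e mul act -> act (inv g) (act g x) = x.
Proof.
  intros [_ [_ Hi]] [Ha1 Ha2]. rewrite <- Ha2. destruct (Hi g) as [-> _]. auto.
Qed.
Lemma act_inv_r {G X} e mul inv (act : G -> X -> X) g x :
  is_group e mul inv -> is_action e mul act -> act g (act (inv g) x) = x.
Proof.
  intros [_ [_ Hi]] [Ha1 Ha2]. rewrite <- Ha2. destruct (Hi g) as [_ ->]. auto.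
Qed.

Lemma act_image_iff {G X} e mul inv (act : G -> X -> X) g (A : X -> Prop) y :
  is_group e mul inv -> is_action e mul act ->
  (act_image act g A y <-> A (act (inv g) y)).
Proof.
  intros Hg Ha. unfold act_image. split.
  - intros [x [Ax ->]]. rewrite (act_inv_l e mul inv); auto.
  - intros H. exists (act (inv g) y). split; auto. rewrite (act_inv_r e mul inv); auto.
Qed.

Lemma sum_f_R0_sumR (f : nat -> R) D : sum_f_R0 f D = sumR (seq 0 (S D)) f.
Proof.
  induction D. simpl; lra.
  rewrite seq_S, sumR_app; simpl. rewrite IHD. simpl. lra.
Qed.

Definition Pi {G X} (act : G -> X -> X) (ER : X -> X -> Prop) (e : G) (W : list G) (x : X) (i : nat) : Prop :=
  component ER x (act (nth i W e) x) /\
  forall j, (j < i)%nat -> act (nth j W e) x <> act (nth i W e) x.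

Lemma first_index {G X} e mul (act : G -> X -> X) S VR ER C x y :
  is_action e mul act -> schreier_subgraph act S VR ER ->
  (forall x, VR x -> exists n, card_eq (component ER x) n /\ (n <= C)%nat) ->
  VR x -> component ER x y ->
  exists i, (i < length (words e mul S C))%nat /\ Pi act ER e (words e mul S C) x i /\
            act (nth i (words e mul S C) e) x = y.
Proof.
  intros Ha Hsub Hc Hx Hxy. set (W := words e mul S C).
  destruct (Hc x Hx) as [n [Hn HnC]].
  pose proof (reach_mono ER _ _ x y HnC (reach_bound ER x n y Hn Hxy)) as Hr.
  destruct (words_reach e mul act S VR ER C x y Ha Hsub Hr) as [g [Hg Eg]].
  destruct (In_nth W g e Hg) as [i [Hi Ei]].
  destruct (min_index (fun j => act (nth j W e) x = y) i) as [m [Pm [Hmi Hmin]]].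
  { simpl. fold W in Ei. rewrite Ei; auto. }
  exists m. split; [lia|]. split; auto. split.
  - rewrite Pm; auto.
  - intros j Hj E. rewrite Pm in E. apply (Hmin j Hj E).
Qed.

Lemma xcount {G X} e mul (act : G -> X -> X) S VR ER C x (phi : X -> R) :
  is_action e mul act -> schreier_subgraph act S VR ER ->
  (forall x, VR x -> exists n, card_eq (component ER x) n /\ (n <= C)%nat) ->
  VR x ->
  sumR (seq 0 (length (words e mul S C)))
    (fun i => ind (VR x /\ Pi act ER e (words e mul S C) x i) * phi (act (nth i (words e mul S C) e) x))
  = sumR (compl ER x) phi.
Proof.
  intros Ha Hsub Hc Hx.
  assert (Hex : exists n, card_eq (component ER x) n) by (destruct (Hc x Hx) as [n [Hn _]]; eauto).
  destruct (compl_spec ER x Hex) as [Hn Hl].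
  apply (sumR_reindex _ _ (fun i => VR x /\ Pi act ER e (words e mul S C) x i)
           (fun i => act (nth i (words e mul S C) e) x)); auto.
  - apply seq_NoDup.
  - intros i j _ _ [_ [_ Hi]] [_ [_ Hj]] E.
    destruct (Nat.lt_total i j) as [H|[H|H]]; auto.
    + exfalso; apply (Hj i H E).
    + exfalso; apply (Hi j H (eq_sym E)).
  - intros y. rewrite Hl. split.
    + intros Hy. destruct (first_index e mul act S VR ER C x y Ha Hsub Hc Hx Hy) as [i [Hi [Pi' E]]].
      exists i. split; [apply in_seq; lia|]. auto.
    + intros [i [_ [[_ [Hc' _]] E]]]. rewrite <- E; auto.
Qed.

Lemma ycount {G X} e mul inv (act : G -> X -> X) S VR ER C y :
  is_group e mul inv -> is_action e mul act -> schreier_subgraph act S VR ER ->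
  (forall x, VR x -> exists n, card_eq (component ER x) n /\ (n <= C)%nat) ->
  VR y ->
  sumR (seq 0 (length (words e mul S C)))
    (fun i => ind (VR (act (inv (nth i (words e mul S C) e)) y) /\
                   Pi act ER e (words e mul S C) (act (inv (nth i (words e mul S C) e)) y) i) * 1)
  = INR (compf ER y).
Proof.
  intros Hg Ha Hsub Hc Hy. set (W := words e mul S C).
  assert (Hsym := proj1 Hsub).
  assert (Hex : exists n, card_eq (component ER y) n) by (destruct (Hc y Hy) as [n [Hn _]]; eauto).
  destruct (compl_spec ER y Hex) as [Hn Hl].
  unfold compf. rewrite <- (Rmult_1_r (INR _)), <- sumR_const.
  apply (sumR_reindex _ _ (fun i => VR (act (inv (nth i W e)) y) /\ Pi act ER e W (act (inv (nth i W e)) y) i)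
           (fun i => act (inv (nth i W e)) y) (fun _ => 1)); auto.
  - apply seq_NoDup.
  - intros i j _ _ [_ [_ Hi]] [_ [_ Hj]] E.
    assert (Ei : act (nth i W e) (act (inv (nth i W e)) y) = y) by (apply (act_inv_r e mul inv); auto).
    assert (Ej : act (nth j W e) (act (inv (nth j W e)) y) = y) by (apply (act_inv_r e mul inv); auto).
    rewrite E in Ei.
    destruct (Nat.lt_total i j) as [H|[H|H]]; auto.
    + exfalso; apply (Hj i H). congruence.
    + exfalso; apply (Hi j H). congruence.
  - intros x. rewrite Hl. split.
    + intros Hyx. assert (Hx : VR x) by (apply (comp_VR act S VR ER y x); auto).
      assert (Hxy : component ER x y) by (apply comp_sym; auto).
      destruct (first_index e mul act S VR ER C x y Ha Hsub Hc Hx Hxy) as [i [Hi [Pi' E]]].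
      fold W in Hi, Pi', E.
      assert (Ex : act (inv (nth i W e)) y = x) by (rewrite <- E; apply (act_inv_l e mul inv); auto).
      exists i. split; [apply in_seq; lia|]. rewrite Ex. auto.
    + intros [i [_ [[_ [Hc' _]] E]]].
      rewrite (act_inv_r e mul inv) in Hc' by auto.
      rewrite <- E. apply comp_sym; auto.
Qed.

Lemma in_seq_le a b : (a <= b)%nat -> In a (seq 0 (Datatypes.S b)).
Proof. intros; apply in_seq; lia. Qed.

Theorem lemma3p2
  (G X : Type) (e : G) (mul : G -> G -> G) (inv : G -> G) (act : G -> X -> X)
  (S : list G) (mu : (X -> Prop) -> R)
  (VR : X -> Prop) (ER : X -> X -> Prop) (C : nat) (alpha : R) :
  is_group e mul inv ->
  is_action e mul act ->
  sym_gen_set e mul inv S ->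
  countably_infinite X ->
  is_mean mu ->
  invariant_mean act mu ->
  schreier_subgraph act S VR ER ->
  (forall x, VR x ->
     exists n m : nat,
       card_eq (component ER x) n /\ (n <= C)%nat /\
       card_eq (component_darts ER x) m /\
       alpha <= (INR m / 2) / INR n) ->
  alpha * mu VR <= mu_E mu ER (length S).
Proof.
  intros Hg Ha _ _ Hm Hinv Hsub Hcomp.
  assert (Hsym := proj1 Hsub).
  assert (Hc : forall x, VR x -> exists n, card_eq (component ER x) n /\ (n <= C)%nat).
  { intros x Hx; destruct (Hcomp x Hx) as [n [m [H1 [H2 _]]]]; eauto. }
  assert (Hex : forall x, VR x -> exists n, card_eq (component ER x) n).
  { intros x Hx; destruct (Hc x Hx) as [n [H _]]; eauto. }
  assert (HcC : forall x, VR x -> (compf ER x <= C)%nat).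
  { intros x Hx. destruct (Hc x Hx) as [n [Hn HnC]].
    rewrite (card_unique _ _ _ (compf_card ER x (Hex x Hx)) Hn); auto. }
  assert (Hcpos : forall x, VR x -> (0 < compf ER x)%nat).
  { intros x Hx. destruct (compl_spec ER x (Hex x Hx)) as [_ Hl]. unfold compf.
    destruct (compl ER x) eqn:Ec; simpl; [|lia]. exfalso. apply (proj2 (Hl x)). apply rt_refl. }
  assert (Hdb : forall x, (degf ER x <= length S)%nat) by (intros; apply (degf_bound act S VR ER); auto).
  set (W := words e mul S C). set (N := length W). set (D := length S).
  set (wt := fun k n : nat => (INR k / 2 - alpha) / INR n).
  set (E := fun i k n (x : X) => ((VR x /\ Pi act ER e W x i) /\ k = degf ER (act (nth i W e) x)) /\ n = compf ER x).
  set (XL := flat_map (fun i => flat_map (fun k => map (fun n => (wt k n, E i k n))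
               (seq 0 (Datatypes.S C))) (seq 0 (Datatypes.S D))) (seq 0 N)).
  set (YL := flat_map (fun i => flat_map (fun k => map (fun n => (wt k n, act_image act (nth i W e) (E i k n)))
               (seq 0 (Datatypes.S C))) (seq 0 (Datatypes.S D))) (seq 0 N)).
  set (TL := map (fun k => (INR k / 2, fun x => deg_eq ER x k)) (seq 0 (Datatypes.S D)) ++ ((- alpha, VR) :: nil)).
  assert (HYX : Int mu YL = Int mu XL).
  { unfold Int, XL, YL. rewrite !sumR_flat_map. apply sumR_ext; intros i _.
    rewrite !sumR_flat_map. apply sumR_ext; intros k _.
    rewrite !sumR_map. apply sumR_ext; intros n _. simpl. rewrite Hinv. reflexivity. }
  assert (HXv : forall x, val XL x = sumR (seq 0 N)
            (fun i => ind (VR x /\ Pi act ER e W x i) * wt (degf ER (act (nth i W e) x)) (compf ER x))).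
  { intros x. unfold val, XL. rewrite sumR_flat_map. apply sumR_ext; intros i _.
    rewrite sumR_flat_map.
    rewrite (sumR_ext _ _ (fun k => ind ((VR x /\ Pi act ER e W x i) /\ k = degf ER (act (nth i W e) x))
                 * wt k (compf ER x))).
    - apply (sumR_collapse _ _ _ (fun k => wt k (compf ER x))). apply seq_NoDup. intros _. apply in_seq_le, Hdb.
    - intros k _. rewrite sumR_map. cbn [fst snd]. apply (sumR_collapse _ _ _ (fun n => wt k n)). apply seq_NoDup.
      intros [[Hx _] _]. apply in_seq_le, HcC, Hx. }
  assert (HX : forall x, 0 <= val XL x).
  { intros x. rewrite HXv. destruct (classic (VR x)) as [Hx|Hx].
    - pose proof (xcount e mul act S VR ER C x (fun y => wt (degf ER y) (compf ER x)) Ha Hsub Hc Hx) as Hxc.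
      simpl in Hxc. fold W N in Hxc. rewrite Hxc.
      destruct (Hcomp x Hx) as [n [m [Hn [_ [Hmd Hal]]]]].
      rewrite <- (card_unique _ _ _ (compf_card ER x (Hex x Hx)) Hn) in Hal.
      pose proof (darts_sum act S VR ER x m Hsub (Hex x Hx) Hmd) as Hds.
      specialize (Hcpos x Hx). apply lt_0_INR in Hcpos.
      unfold wt. rewrite (sumR_ext _ _ (fun y => / (2 * INR (compf ER x)) * INR (degf ER y) + (- alpha / INR (compf ER x)))).
      + rewrite sumR_plus, sumR_scal, sumR_const, <- Hds. fold (compf ER x).
        assert (INR (compf ER x) * (- alpha / INR (compf ER x)) = - alpha) by (field; lra).
        assert (/ (2 * INR (compf ER x)) * INR m = INR m / 2 / INR (compf ER x)) by (field; lra).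
        lra.
      + intros y _. field. lra.
    - rewrite sumR_zero. lra. intros i _. rewrite ind_false by tauto. lra. }
  assert (HYv : forall y, val YL y = ind (VR y) * (INR (degf ER y) / 2 - alpha)).
  { intros y. unfold val, YL. rewrite sumR_flat_map.
    rewrite (sumR_ext _ _ (fun i => ind (VR (act (inv (nth i W e)) y) /\ Pi act ER e W (act (inv (nth i W e)) y) i) * wt (degf ER y) (compf ER y))).
    - rewrite (sumR_ext _ _ (fun i => wt (degf ER y) (compf ER y) * (ind (VR (act (inv (nth i W e)) y) /\ Pi act ER e W (act (inv (nth i W e)) y) i) * 1))) by (intros; lra).
      rewrite sumR_scal. destruct (classic (VR y)) as [Hy|Hy].
      + pose proof (ycount e mul inv act S VR ER C y Hg Ha Hsub Hc Hy) as Hyc. fold W N in Hyc.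
        rewrite Hyc. rewrite ind_true by auto. unfold wt.
        specialize (Hcpos y Hy). apply lt_0_INR in Hcpos. field. lra.
      + rewrite sumR_zero. rewrite ind_false by auto. lra.
        intros i _. rewrite ind_false. lra. intros [Hx [Hc' _]].
        rewrite (act_inv_r e mul inv) in Hc' by auto. apply Hy, (comp_VR act S VR ER _ _ Hsub Hx Hc').
    - intros i _. set (xi := act (inv (nth i W e)) y). rewrite sumR_flat_map.
      rewrite (sumR_ext _ _ (fun k => ind ((VR xi /\ Pi act ER e W xi i) /\ k = degf ER (act (nth i W e) xi))
                 * wt k (compf ER xi))).
      + rewrite (sumR_collapse _ _ _ (fun k => wt k (compf ER xi))). 2: apply seq_NoDup.
        2: { intros _. apply in_seq_le, Hdb. }
        destruct (classic (VR xi /\ Pi act ER e W xi i)) as [[Hx Hp]|Hn].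
        * rewrite !ind_true by auto.
          assert (Exi : act (nth i W e) xi = y) by (apply (act_inv_r e mul inv); auto).
          rewrite Exi. destruct Hp as [Hp _]. rewrite Exi in Hp.
          rewrite (compf_same ER xi y Hsym (Hex xi Hx) Hp). reflexivity.
        * rewrite !ind_false by auto. lra.
      + intros k _. rewrite sumR_map.
        rewrite (sumR_ext _ _ (fun n => ind (((VR xi /\ Pi act ER e W xi i) /\ k = degf ER (act (nth i W e) xi)) /\ n = compf ER xi) * wt k n)).
        * apply (sumR_collapse _ _ _ (fun n => wt k n)). apply seq_NoDup.
          intros [[Hx _] _]. apply in_seq_le, HcC, Hx.
        * intros n _. simpl. f_equal. apply ind_iff. rewrite (act_image_iff e mul inv); auto. unfold E, xi. tauto. }
  assert (HTv : forall x, val TL x = ind (VR x) * (INR (degf ER x) / 2 - alpha)).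
  { intros x. unfold TL. rewrite val_app. unfold val at 1. rewrite sumR_map. cbn [fst snd].
    rewrite (sumR_ext _ _ (fun k => ind (True /\ k = degf ER x) * (INR k / 2))).
    - rewrite (sumR_collapse _ _ _ (fun k => INR k / 2)). 2: apply seq_NoDup.
      2: { intros _. apply in_seq_le, Hdb. }
      unfold val; simpl. rewrite (ind_true True) by auto.
      destruct (classic (VR x)) as [Hx|Hx].
      + rewrite ind_true by auto. lra.
      + rewrite ind_false by auto. rewrite (degf_notVR act S VR ER x Hsub Hx). simpl. lra.
    - intros k _. f_equal. apply ind_iff. rewrite (deg_eq_iff act S VR ER x k Hsub). tauto. }
  assert (H1 : 0 <= Int mu XL) by (apply Int_nonneg; auto).
  assert (H3 : 0 <= Int mu (TL ++ negl YL)).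
  { apply Int_nonneg; auto. intros x. rewrite val_app, val_negl, HTv, HYv. lra. }
  rewrite Int_app, Int_negl in H3.
  assert (H4 : Int mu TL = mu_E mu ER D - alpha * mu VR).
  { unfold Int, TL, mu_E. rewrite sumR_app, sumR_map. cbn [fst snd sumR]. rewrite sum_f_R0_sumR.
    rewrite <- sumR_scal. rewrite (sumR_ext _ (fun k => INR k / 2 * mu (fun x => deg_eq ER x k))
      (fun k => / 2 * (INR k * mu (fun x => deg_eq ER x k)))) by (intros; field). lra. }
  fold D. lra.
Qed.
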